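(* Against a non-adaptive adversary, every online algorithm (deterministic or randomized) has competitive ratio $\Omega(\log n)$ with respect to the \textsc{Min-Max} objective, where $n$ is the number of agents.
   Context: An instance $\mathcal{I}=(N,P,T,(\mathbf{D}_i)_{i\in N})$ has agents $N=[n]$, projects $P$, timesteps $T=[\ell]$, and disapproval sets $D_{ik}\subseteq P$. An outcome is $\mathbf{o}\in P^\ell$ and $d_i(\mathbf{o})=|\{k\in T:o_k\in D_{ik}\}|$. An online algorithm chooses each $o_k$ (possibly at random) based only on $(D_{it})_{i\in N,t\in[k]}$. A non-adaptive adversary fixes the (possibly randomly drawn) instance without access to the algorithm's random choices. The competitive ratio of $\mathcal{B}$ with respect to \textsc{Min-Max} is the supremum over instances of the ratio between the (expected) value $\max_i d_i(\mathcal{B}(\mathcal{I}))$ and the optimum $\min_{\mathbf{o}}\max_i d_i(\mathbf{o})$. *)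

(* Defs.v *)
From HB Require Import structures.
From mathcomp Require Import all_boot all_order all_algebra.
From mathcomp Require Import reals exp.
Set Implicit Arguments. Unset Strict Implicit. Unset Printing Implicit Defensive.
Import Order.TTheory GRing.Theory Num.Theory.
Local Open Scope ring_scope.

(* Agents N = 'I_n, projects P = 'I_m.+1 (a nonempty finite set), timesteps
   T = 'I_ell. A profile at one timestep: agent i |-> disapproval set D_{ik}. *)
Definition profile (n m : nat) := {ffun 'I_n -> {set 'I_m.+1}}.

Definition instance (n m ell : nat) := {ffun 'I_ell -> profile n m}.

Definition outcome (m ell : nat) := {ffun 'I_ell -> 'I_m.+1}.

Definition disappr n m ell (D : instance n m ell) (o : outcome m ell) (i : 'I_n)
  : nat := #|[set k : 'I_ell | o k \in D k i]|.

Definition maxdis n m ell (D : instance n m ell) (o : outcome m ell) : nat :=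
  \max_(i < n) disappr D o i.

(* OPT = min_o max_i d_i(o)   (ell is an upper bound for every max_i d_i(o)) *)
Definition opt n m ell (D : instance n m ell) : nat :=
  \big[minn/ell]_(o : outcome m ell) maxdis D o.

(* A (possibly randomized) online algorithm for n agents, as a behavioural
   strategy: given the project set (size m.+1), the profiles revealed so far
   (D_{.,1}, ..., D_{.,k}) and its own previous choices (o_1, ..., o_{k-1}),
   it outputs a probability distribution over the choice o_k. *)
Definition online_alg (R : realType) (n : nat) :=
  forall m : nat, seq (profile n m) -> seq 'I_m.+1 -> {ffun 'I_m.+1 -> R}.

Definition valid_alg (R : realType) n (B : online_alg R n) : Prop :=
  forall m (hist : seq (profile n m)) (past : seq 'I_m.+1),
    (forall p, 0 <= B m hist past p) /\ \sum_p B m hist past p = 1.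

Definition prob_outcome (R : realType) n (B : online_alg R n) m ell
  (D : instance n m ell) (o : outcome m ell) : R :=
  \prod_(k : 'I_ell)
     B m (map D (take k.+1 (enum 'I_ell))) (map o (take k (enum 'I_ell))) (o k).

Definition expected_cost (R : realType) n (B : online_alg R n) m ell
  (D : instance n m ell) : R :=
  \sum_(o : outcome m ell) prob_outcome B D o * (maxdis D o)%:R.

(* Main.v *)
Require Import Defs.
From HB Require Import structures.
From mathcomp Require Import all_boot all_order all_algebra.
From mathcomp Require Import reals exp.
From mathcomp Require Import zify lra.
Import Order.TTheory GRing.Theory Num.Theory.
Set Implicit Arguments. Unset Strict Implicit. Unset Printing Implicit Defensive.

Definition xb (c : seq bool) : nat := foldr (fun (b : bool) acc => b + acc.*2)%N 0%N c.

Lemma xb_bits c l : (l < size c)%N -> odd (xb c %/ 2 ^ l) = nth false c l.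
Proof.
elim: c l => [|b c IH] [|l] //= Hl.
  by rewrite expn0 divn1 oddD odd_double addbF; by case: b.
rewrite expnS divnMA divn2 half_bit_double; exact: IH.
Qed.

Lemma xb_lt c : (xb c < 2 ^ size c)%N.
Proof.
elim: c => [|b c IH] //=; rewrite expnS -mul2n.
case: b => /=; lia.
Qed.

Local Open Scope ring_scope.

Section Rec.
Variables (R : realType) (T : finType).

Fixpoint Rec (g : seq T -> T -> R) (r : nat) (s : seq T) (F : seq T -> R) : R :=
  match r with 0 => F s | r'.+1 => \sum_p g s p * Rec g r' (rcons s p) F end.

Lemma Rec_add g a b s F :
  Rec g (a + b) s F = Rec g a s (fun s' => Rec g b s' F).
Proof.
elim: a s => [|a IH] s //=.
by apply: eq_bigr => p _; rewrite IH.
Qed.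

Lemma Rec_ext_size g r s F F' :
  (forall s', size s' = (size s + r)%N -> F s' = F' s') -> Rec g r s F = Rec g r s F'.
Proof.
elim: r s => [|r IH] s H /=; first by apply: H; rewrite addn0.
apply: eq_bigr => p _; congr (_ * _); apply: IH => s' Hs'; apply: H.
by rewrite Hs' size_rcons addSnnS.
Qed.

Lemma Rec_local g g' r s F :
  (forall s' p, (size s' < size s + r)%N -> g s' p = g' s' p) ->
  Rec g r s F = Rec g' r s F.
Proof.
elim: r s => [|r IH] s H //=.
apply: eq_bigr => p _; rewrite H ?addnS ?ltnS ?leq_addr //; congr (_ * _).
apply: IH => s' q Hs; apply: H; by move: Hs; rewrite size_rcons addSnnS.
Qed.

Lemma Rec_const g t F :
  (forall s, \sum_p g s p = 1) ->
  (forall s p, (t <= size s)%N -> F (rcons s p) = F s) ->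
  forall r s, (t <= size s)%N -> Rec g r s F = F s.
Proof.
move=> Hg HF; elim=> [|r IH] s Hs //=.
rewrite (eq_bigr (fun p => g s p * F s)); last first.
  move=> p _; rewrite IH ?HF // size_rcons; exact: leqW.
by rewrite -mulr_suml Hg mul1r.
Qed.

Lemma Rec_lin g r s F1 F2 :
  Rec g r s (fun s' => F1 s' + F2 s') = Rec g r s F1 + Rec g r s F2.
Proof.
elim: r s => [|r IH] s //=.
rewrite -big_split; apply: eq_bigr => p _; by rewrite IH mulrDr.
Qed.

Lemma Rec_ffun g F r s :
  \sum_(o : {ffun 'I_r -> T})
     (\prod_(k : 'I_r) g (s ++ map o (take k (enum 'I_r))) (o k)) * F (s ++ map o (enum 'I_r))
  = Rec g r s F.
Proof.
elim: r s => [|r IH] s /=.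
  rewrite (eq_bigr (fun _ => F s)); last first.
    by move=> o _; rewrite big_ord0 mul1r enum_ord0 cats0.
  by rewrite sumr_const card_ffun card_ord expn0 mulr1n.
pose h (q : T * {ffun 'I_r -> T}) : {ffun 'I_r.+1 -> T} :=
  [ffun i => if unlift ord0 i is Some j then q.2 j else q.1].
pose h' (o : {ffun 'I_r.+1 -> T}) := (o ord0, [ffun j => o (lift ord0 j)]).
have hK : cancel h h'.
  by case=> p o'; rewrite /h /h' /= !ffunE unlift_none; congr pair; apply/ffunP => j; rewrite !ffunE liftK.
have h'K : cancel h' h.
  move=> o; apply/ffunP => i; rewrite /h /h' !ffunE; by case: unliftP => [j|] ->; rewrite ?ffunE.
pose G (o : {ffun 'I_r.+1 -> T}) := (\prod_(k : 'I_r.+1) g (s ++ map o (take k (enum 'I_r.+1))) (o k)) * F (s ++ map o (enum 'I_r.+1)).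
rewrite (eq_bigr G) // (reindex h); last by exists h' => q _; [apply: hK| apply: h'K].
rewrite (eq_bigr (fun q => G (h (q.1, q.2)))); last by case.
rewrite -(pair_bigA _ (fun p o' => G (h (p, o')))) /= /G.
apply: eq_bigr => p _; rewrite -IH mulr_sumr; apply: eq_bigr => o' _.
have E1 : forall j : 'I_r, map (h (p, o')) (take (lift ord0 j) (enum 'I_r.+1)) = p :: map o' (take j (enum 'I_r)).
  move=> j; rewrite enum_ordSl /= /h ffunE unlift_none; congr cons.
  rewrite -map_take -map_comp; apply: eq_map => k /=; by rewrite ffunE liftK.
have E2 : map (h (p, o')) (enum 'I_r.+1) = p :: map o' (enum 'I_r).
  rewrite enum_ordSl /= /h ffunE unlift_none; congr cons.
  rewrite -map_comp; apply: eq_map => k /=; by rewrite ffunE liftK.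
rewrite big_ord_recl /= take0 cats0 {1}/h ffunE unlift_none -mulrA; congr (_ * _).
rewrite E2 -cat_rcons; congr (_ * _); apply: eq_bigr => j _.
by rewrite E1 -cat_rcons /h ffunE liftK.
Qed.

End Rec.

Lemma bigmin_le (T : finType) (F : T -> nat) x i0 : (\big[minn/x]_(i : T) F i <= F i0)%N.
Proof.
move: (mem_index_enum i0); elim: (index_enum T) => //= a l IH.
rewrite inE big_cons => /orP [/eqP <-|/IH H]; first exact: geq_minl.
exact: leq_trans (geq_minr _ _) H.
Qed.

Section Constr.
Variables (R : realType) (n : nat) (B : online_alg R n).
Hypothesis HB : valid_alg B.

Definition alive (c : seq bool) (j : nat) (i : nat) : bool :=
  [forall l : 'I_j, odd (i %/ 2 ^ l) == nth false c l].

Definition prof (c : seq bool) (j : nat) : profile n 1 :=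
  [ffun i : 'I_n => if alive c j i then [set p : 'I_2 | (p : nat) == odd (i %/ 2 ^ j)] else set0].

Definition gC (c : seq bool) : seq 'I_2 -> 'I_2 -> R :=
  fun s p => @B 1%N (map (prof c) (iota 0 (size s).+1)) s p.

Definition Fk (k : nat) (b : bool) : seq 'I_2 -> R :=
  fun s => ((nth ord0 s k : nat) == b)%:R.

Definition Mg (c : seq bool) (b : bool) : R := Rec (gC c) (size c).+1 [::] (Fk (size c) b).

Definition choose (c : seq bool) : bool := Mg c false < 1 / 2.

Definition cs (k : nat) : seq bool := iter k (fun c => rcons c (choose c)) [::].

Lemma size_cs k : size (cs k) = k.
Proof. by elim: k => //= k IH; rewrite size_rcons IH. Qed.

Lemma take_cs k h : (k <= h)%N -> take k (cs h) = cs k.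
Proof.
elim: h => [|h IH]; first by rewrite leqn0 => /eqP ->.
rewrite leq_eqVlt => /orP [/eqP ->|]; first by rewrite take_oversize ?size_cs.
rewrite ltnS => Hk /=; rewrite -cats1 takel_cat ?size_cs //; exact: IH.
Qed.

Lemma nth_cs k h : (k < h)%N -> nth false (cs h) k = choose (cs k).
Proof.
move=> Hk; rewrite -(nth_take _ (ltnSn k)) take_cs //= nth_rcons size_cs ltnn eqxx //.
Qed.

Lemma gsum (c : seq bool) s : \sum_p gC c s p = 1.
Proof. by case: (HB (m:=1%N) (map (prof c) (iota 0 (size s).+1)) s). Qed.

Lemma Mg_half c : 1 / 2 <= Rec (gC c) (size c).+1 [::] (Fk (size c) (choose c)).
Proof.
have H1 : Mg c false + Mg c true = 1.
  rewrite /Mg -Rec_lin; transitivity (Rec (gC c) (size c).+1 [::] (fun=> 1)).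
    apply: Rec_ext_size => s' _; rewrite /Fk; case: (nth ord0 s' (size c)) => [[|[|x]] Hx] //=.
    by rewrite addr0. by rewrite add0r.
  apply: (@Rec_const R _ (gC c) 0) => //; exact: gsum.
rewrite /choose; case: ltrP => H; rewrite -/(Mg c _) //.
move: H1 H; set a := Mg c false; set b := Mg c true => H1 H.
lra.
Qed.


Section Main.
Variables (h : nat).
Hypotheses (Hh : (0 < h)%N) (Hn : (2 ^ h <= n)%N).

Let c := cs h.
Let D : instance n 1 h := [ffun k : 'I_h => prof c k].

Lemma istar_lt : (xb c < n)%N.
Proof. by apply: leq_trans (xb_lt c) _; rewrite size_cs. Qed.

Let istar : 'I_n := Ordinal istar_lt.

Lemma hit (o : outcome 1 h) (k : 'I_h) :
  (o k \in D k istar) = ((o k : nat) == nth false c k).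
Proof.
rewrite !ffunE /=.
have -> : alive c k (xb c).
  apply/forallP => l; rewrite xb_bits ?size_cs //; exact: ltn_trans (ltn_ord l) (ltn_ord k).
by rewrite in_set xb_bits ?size_cs.
Qed.

Lemma disappr_sum (o : outcome 1 h) :
  (disappr D o istar)%:R = \sum_(k : 'I_h) Fk k (nth false c k) (map o (enum 'I_h)) :> R.
Proof.
rewrite /disappr -sum1_card big_mkcond natr_sum; apply: eq_bigr => k _.
rewrite in_set hit /Fk (nth_map k) ?size_enum_ord // nth_ord_enum.
by case: eqP.
Qed.

Definition gD : seq 'I_2 -> 'I_2 -> R :=
  fun s p => @B 1%N (map D (take (size s).+1 (enum 'I_h))) s p.

Lemma prob_eq (o : outcome 1 h) :
  prob_outcome B D o = \prod_(k : 'I_h) gD ([::] ++ map o (take k (enum 'I_h))) (o k).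
Proof.
apply: eq_bigr => k _; by rewrite cat0s /gD size_map size_take size_enum_ord ltn_ord.
Qed.

Lemma prob_ge0 (o : outcome 1 h) : 0 <= prob_outcome B D o.
Proof. apply: prodr_ge0 => k _; case: (HB (m:=1%N) (map D (take k.+1 (enum 'I_h))) (map o (take k (enum 'I_h)))) => H _; exact: H. Qed.

Lemma mapD t : (t <= h)%N -> map D (take t (enum 'I_h)) = map (prof c) (iota 0 t).
Proof.
move=> Ht; rewrite (eq_map (g := fun i : 'I_h => prof c i)); last by move=> i; rewrite ffunE.
by rewrite (map_comp (prof c) val) map_take val_enum_ord take_iota (minn_idPl Ht).
Qed.

Lemma marg (k : 'I_h) :
  1 / 2 <= \sum_(o : outcome 1 h) prob_outcome B D o * Fk k (nth false c k) (map o (enum 'I_h)).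
Proof.
rewrite (eq_bigr (fun o : outcome 1 h => (\prod_(j : 'I_h) gD ([::] ++ map o (take j (enum 'I_h))) (o j))
   * Fk k (nth false c k) ([::] ++ map o (enum 'I_h)))); last by move=> o _; rewrite prob_eq cat0s.
rewrite Rec_ffun.
have Hk : (k.+1 <= h)%N := ltn_ord k.
have -> : Rec gD h [::] (Fk k (nth false c k)) =
          Rec gD (k.+1 + (h - k.+1)) [::] (Fk k (nth false c k)) by rewrite subnKC.
rewrite Rec_add.
rewrite (@Rec_ext_size _ _ _ _ _ _ (Fk k (nth false c k))); last first.
  move=> s' Hs'; apply: (@Rec_const _ _ _ k.+1).
  - move=> s; by case: (HB (m:=1%N) (map D (take (size s).+1 (enum 'I_h))) s).
  - by move=> s p Hs; rewrite /Fk nth_rcons Hs.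
  - by rewrite Hs'.
rewrite (@Rec_local _ _ _ (gC (cs k))); last first.
  move=> s' p Hs'; rewrite /gD /gC mapD; last exact: leq_trans Hs' Hk.
  have -> : map (prof c) (iota 0 (size s').+1) = map (prof (cs k)) (iota 0 (size s').+1); last by []. apply/eq_in_map => j; rewrite mem_iota => /andP [_ Hj].
  apply/ffunP => i; rewrite !ffunE; congr (if _ then _ else _).
  apply: eq_forallb => l; congr (_ == _).
  rewrite -(take_cs (ltnW Hk)) nth_take // /c; apply: leq_trans (ltn_ord l) _.
  by move: Hj Hs'; rewrite add0n /=; lia.
have := Mg_half (cs k); rewrite size_cs /c nth_cs //.
Qed.

Lemma cost_bound : h%:R / 2 <= expected_cost B D.
Proof.
apply: le_trans (_ : \sum_(o : outcome 1 h) prob_outcome B D o * (disappr D o istar)%:R <= _).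
  under eq_bigr => o _ do rewrite disappr_sum mulr_sumr.
  rewrite exchange_big /=.
  apply: le_trans (_ : \sum_(k : 'I_h) (1 / 2 : R) <= _); last first.
    by apply: ler_sum => k _; exact: marg.
  by rewrite sumr_const card_ord -[X in _ <= X]mulr_natl mul1r.
apply: ler_sum => o _; apply: ler_wpM2l; first exact: prob_ge0.
by rewrite ler_nat /maxdis; exact: (leq_bigmax istar).
Qed.


Definition ostar : outcome 1 h := [ffun k : 'I_h => inord (~~ nth false c k)].

Lemma hit_star (i : 'I_n) (k : 'I_h) :
  (ostar k \in D k i) = alive c k i && ((~~ nth false c k : nat) == odd (i %/ 2 ^ k)).
Proof.
rewrite !ffunE; case: alive; rewrite ?in_set ?in_set0 // inordK //; by case: nth.
Qed.

Lemma no2 (i : 'I_n) (k1 k2 : 'I_h) : (k1 < k2)%N ->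
  ostar k1 \in D k1 i -> ostar k2 \in D k2 i -> False.
Proof.
move=> lt; rewrite !hit_star => /andP [_ E1] /andP [/forallP A _].
have := A (Ordinal lt); move: E1 => /=; case: nth; case: odd => //.
Qed.

Lemma opt_le1 : (opt D <= 1)%N.
Proof.
apply: (@leq_trans (maxdis D ostar)).
  exact: bigmin_le.
apply/bigmax_leqP => i _.
rewrite leqNgt; apply/negP => /card_gt1P [k1 [k2 []]].
rewrite !in_set => H1 H2 Hne.
case: (ltngtP k1 k2) => Hk.
- exact: (no2 Hk H1 H2).
- exact: (no2 Hk H2 H1).
- by move: Hne; rewrite (val_inj Hk) eqxx.
Qed.

Lemma opt_gt0 : (0 < opt D)%N.
Proof.
rewrite /opt; apply: (big_ind (fun x => 0 < x)%N) => //.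
  by move=> x y; rewrite leq_min => -> ->.
move=> o _.
have H2 : (2 <= n)%N by apply: leq_trans Hn; exact: (leq_pexp2l (isT : (0 < 2)%N) Hh).
pose k0 : 'I_h := Ordinal Hh.
have Ha : (o k0 < n)%N by apply: leq_trans H2; exact: ltn_ord.
pose a : 'I_n := Ordinal Ha.
apply: leq_trans (leq_bigmax a).
apply/card_gt0P; exists k0; rewrite in_set !ffunE /=.
have -> : alive c 0 (o k0) by apply/forallP => -[l Hl].
rewrite in_set expn0 divn1; by case: (o k0) => [[|[|x]] Hx].
Qed.

Lemma main_exists : exists D : instance n 1 h,
  [/\ (0 < opt D)%N, (opt D <= 1)%N & h%:R / 2 <= expected_cost B D].
Proof. exists D; split; [exact: opt_gt0 | exact: opt_le1 | exact: cost_bound]. Qed.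

End Main.

End Constr.

Unset Implicit Arguments.


Theorem proposition4 (R : realType) :
  exists c : R, 0 < c /\
  exists n0 : nat, forall n : nat, (n0 <= n)%N ->
  forall B : online_alg R n, valid_alg B ->
  exists (m ell : nat) (D : instance n m ell),
    (0 < opt D)%N /\ c * ln (n%:R : R) * (opt D)%:R <= expected_cost B D.
Proof.
exists (1 / 4); split; first lra.
exists 2%N => n Hn2 B HB.
set h := trunc_log 2 n.
have Hlt : (n < 2 ^ h.+1)%N := trunc_log_ltn n (isT : (1 < 2)%N).
have Hle : (2 ^ h <= n)%N := trunc_logP (isT : (1 < 2)%N) (leq_trans (isT : (0 < 2)%N) Hn2).
have Hh : (0 < h)%N.
  rewrite lt0n; apply/negP => /eqP H0; move: Hlt; rewrite H0 expn1; lia.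
have [D [H0 H1 Hc]] := main_exists HB Hh Hle.
exists 1%N, h, D; split => //.
have Hn0 : (0 : R) < n%:R by rewrite ltr0n; lia.
have Lge0 : 0 <= ln (n%:R : R) by apply: ln_ge0; rewrite ler1n; lia.
have Lle : ln (n%:R : R) <= h.+1%:R.
  apply: (le_trans (y := ln ((2 : R) ^+ h.+1))).
    rewrite ler_ln ?posrE ?exprn_gt0 //.
    have -> : (2:R) ^+ h.+1 = (2 ^ h.+1)%:R by rewrite natrX.
    by rewrite ler_nat ltnW.
  rewrite lnXn; last by lra.
  have H1' : -1 < (1:R) by lra.
  have L2 : ln (2 : R) <= 1 by exact: (le_ln1Dx H1').
  rewrite -[ln _ *+ _]mulr_natr; have Hp : 0 <= h.+1%:R :> R by []. apply: le_trans (ler_wpM2r Hp L2) _; by rewrite mul1r.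
have Oge : 0 <= (opt D)%:R :> R by [].
have Ole : (opt D)%:R <= 1 :> R by rewrite -[1 : R]/(1%:R) ler_nat.
have Hh1 : 1 <= h%:R :> R by rewrite ler1n.
move: Lle; rewrite -natr1 => Lle.
nra.
Qed.
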